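(* Let $I_A$ and $I_B$ be two MatP instances with the same underlying graph that differ only in the preference order of a single agent $x$. Let $M$ be a matching that leaves $x$ unmatched. Then (1) $M$ is popular for $I_A$ if and only if $M$ is popular for $I_B$, and (2) $M$ is dominant for $I_A$ if and only if $M$ is dominant for $I_B$.
   Context: An instance $I$ of matchings under preferences (MatP) consists of a bipartite graph $G^I=(W\cup F,E^I)$ with disjoint finite vertex sets $W$ (workers) and $F$ (firms), whose elements are called agents, together with, for each agent $x$, a strict linear order $\succ_x^I$ over the set $N_x^I$ of neighbors of $x$ in $G^I$. A matching is a set of pairwise disjoint edges; $M(x)$ denotes the partner of a matched agent $x$. Agent $x$ prefers $M$ over $M'$ if $x$ is matched in $M$ and unmatched in $M'$, or matched in both with $M(x)\succ_x M'(x)$. Define $\mathrm{vote}^I_x(M,M')=1$ if $x$ prefers $M$ over $M'$, $-1$ if $x$ prefers $M'$ over $M$, and $0$ otherwise, and $\phi^I(M,M')=\sum_{x\in W\cup F}\mathrm{vote}^I_x(M,M')$. A matching $M$ of $G^I$ is popular for $I$ if $\phi^I(M,M')\ge 0$ for every matching $M'$ of $G^I$; it is dominant for $I$ if it is popular and $\phi^I(M,M')>0$ for every matching $M'$ of $G^I$ with $|M'|>|M|$. *)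

(* Defs.v *)
From mathcomp Require Import all_boot all_order all_algebra.
Set Implicit Arguments. Unset Strict Implicit. Unset Printing Implicit Defensive.
Import Order.TTheory GRing.Theory Num.Theory.

(* Workers are the elements of a finType T, firms those of a finType U;
   agents are elements of the disjoint union T + U. *)
Section MatP.
Variables (T U : finType).
Local Notation agent := (T + U)%type.

Definition adj (E : {set T * U}) (x y : agent) : bool :=
  match x, y with
  | inl w, inr f => (w, f) \in E
  | inr f, inl w => (w, f) \in E
  | _, _ => false
  end.

(* pref x a b  means  a >_x b. Outside N_x it is irrelevant. *)
Definition valid_prefs (E : {set T * U}) (pref : agent -> rel agent) : Prop :=
  forall x : agent,
    (forall a, adj E x a -> ~~ pref x a a) /\
    (forall a b c, adj E x a -> adj E x b -> adj E x c ->
        pref x a b -> pref x b c -> pref x a c) /\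
    (forall a b, adj E x a -> adj E x b -> a != b -> pref x a b || pref x b a).

Definition is_matching (E : {set T * U}) (M : {set T * U}) : Prop :=
  M \subset E /\
  (forall e1 e2, e1 \in M -> e2 \in M -> e1 != e2 ->
     (e1.1 != e2.1) && (e1.2 != e2.2)).

Definition partner (M : {set T * U}) (x y : agent) : bool :=
  match x, y with
  | inl w, inr f => (w, f) \in M
  | inr f, inl w => (w, f) \in M
  | _, _ => false
  end.

Definition matched (M : {set T * U}) (x : agent) : bool :=
  [exists y, partner M x y].

(* x prefers M over M': x matched in M, and either unmatched in M' or
   M(x) >_x M'(x). *)
Definition prefers (pref : agent -> rel agent) (M M' : {set T * U}) (x : agent)
  : bool :=
  [exists y, partner M x y && [forall y', partner M' x y' ==> pref x y y']].

Definition vote (pref : agent -> rel agent) (M M' : {set T * U}) (x : agent)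
  : int :=
  if prefers pref M M' x then 1%R
  else if prefers pref M' M x then (-1)%R else 0%R.

Definition phi (pref : agent -> rel agent) (M M' : {set T * U}) : int :=
  (\sum_(x : agent) vote pref M M' x)%R.

Definition popular (E : {set T * U}) (pref : agent -> rel agent)
  (M : {set T * U}) : Prop :=
  is_matching E M /\
  forall M', is_matching E M' -> (0 <= phi pref M M')%R.

Definition dominant (E : {set T * U}) (pref : agent -> rel agent)
  (M : {set T * U}) : Prop :=
  popular E pref M /\
  forall M', is_matching E M' -> #|M| < #|M'| -> (0 < phi pref M M')%R.

End MatP.

(* Main.v *)
Require Import Defs.
From mathcomp Require Import all_boot all_order all_algebra.

Lemma partner_adj (T U : finType) (E M : {set T * U}) y a :
  M \subset E -> partner M y a -> adj E y a.
Proof.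
move=> /subsetP sME; case: y => [w|f]; case: a => [w'|f'] //=; exact: sME.
Qed.

Lemma prefers_eq {T U : finType} {E M M' : {set T * U}}
  {pA pB : (T + U)%type -> rel (T + U)%type} {y} :
  M \subset E -> M' \subset E ->
  (forall a b, adj E y a -> adj E y b -> pA y a b = pB y a b) ->
  prefers pA M M' y = prefers pB M M' y.
Proof.
move=> sM sM' H; rewrite /prefers; apply: eq_existsb => a.
case Ha: (partner M y a) => //=; apply: eq_forallb => b.
case Hb: (partner M' y b) => //=; apply: H; exact: partner_adj Ha || exact: partner_adj Hb.
Qed.

Lemma phi_eq (T U : finType) (E M M' : {set T * U})
  (pA pB : (T + U)%type -> rel (T + U)%type) x :
  (forall y, y != x -> forall a b, adj E y a -> adj E y b ->
     pA y a b = pB y a b) ->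
  M \subset E -> M' \subset E -> ~~ matched M x ->
  phi pA M M' = phi pB M M'.
Proof.
move=> H sM sM' nm; rewrite /phi; apply: eq_bigr => y _; rewrite /vote.
have [->|nyx] := eqVneq y x.
  have pn : forall b, partner M x b = false.
    move=> b; apply/negP => hb; move/negP: nm; apply; apply/existsP; by exists b.
  have pf : forall p, prefers p M M' x = false.
    move=> p; rewrite /prefers; apply: negbTE; apply/existsPn => a; by rewrite pn.
  rewrite !pf.
  suff -> : prefers pA M' M x = prefers pB M' M x by [].
  rewrite /prefers; apply: eq_existsb => a; congr andb; apply: eq_forallb => b.
  by rewrite pn.
by rewrite (prefers_eq sM sM' (H y nyx)) (prefers_eq sM' sM (H y nyx)).
Qed.

Theorem lemma3 (T U : finType) (E : {set T * U})
  (prefA prefB : (T + U)%type -> rel (T + U)%type) (x : (T + U)%type)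
  (M : {set T * U}) :
  valid_prefs E prefA ->
  valid_prefs E prefB ->
  (* I_A and I_B differ only in the preference order of agent x *)
  (forall y, y != x -> forall a b, adj E y a -> adj E y b ->
     prefA y a b = prefB y a b) ->
  is_matching E M ->
  ~~ matched M x ->
  (popular E prefA M <-> popular E prefB M) /\
  (dominant E prefA M <-> dominant E prefB M).
Proof.
move=> _ _ H mM nm.
have E' : forall M', is_matching E M' -> phi prefA M M' = phi prefB M M'.
  by move=> M' [sM' _]; exact: (@phi_eq T U E M M' prefA prefB x H mM.1 sM' nm).
have P : popular E prefA M <-> popular E prefB M.
  rewrite /popular; split=> [[m h]|[m h]]; split=> // M' hM'.
    by rewrite -E' //; apply: h.
  by rewrite E' //; apply: h.
split=> //; rewrite /dominant; split=> [[p h]|[p h]]; split; try by apply/P.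
  by move=> M' hM' c; rewrite -E' //; apply: h.
by move=> M' hM' c; rewrite E' //; apply: h.
Qed.
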